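(* Let $(\Omega,\mathcal F,\mathbb P)$ be an atomless probability space and $\mathcal X$ the set of all random variables on it. Let $X\in\mathcal X$ be continuously distributed, let $n\ge1$, $\alpha_1,\dots,\alpha_n>0$ with $\sum_{i=1}^n\alpha_i<1$, and $\beta\in[0,1]$. Define $V_\beta(X)=\inf\Big\{\sum_{i=1}^n\mathrm Q_{\alpha_i}(X_i): (X_1,\dots,X_n)\in\mathcal X^n,\ \sum_{i=1}^nX_i\ge X,\ X_i\uparrow_\beta X \text{ for } i=1,\dots,n\Big\}.$ Then $V_\beta(X)=\mathrm Q_\gamma(X)$, where $\gamma=\beta\wedge\big(\bigvee_{i=1}^n\alpha_i\big)+\sum_{i=1}^n(\alpha_i-\beta)_+$.
   Context: For $\alpha\in(0,1)$ and $Y\in\mathcal X$, $\mathrm Q_\alpha(Y)=\inf\{x\in\mathbb R:\mathbb P(Y\le x)\ge1-\alpha\}$ (the left $(1-\alpha)$-quantile). For $p\in[0,1)$, $\mathrm{VaR}_p(Z)=\inf\{x\in\mathbb R:\mathbb P(Z\le x)>p\}$, $A^Z_p=\{\omega: Z(\omega)>\mathrm{VaR}_p(Z)\}$ and $\mathcal P^Z_p=\{\delta_\omega\times\delta_{\omega'}:\omega\in A^Z_p,\ \omega'\in(A^Z_p)^c\}$. For random variables $Y,Z$, $Y\uparrow_\beta Z$ means that $Y$ and $Z$ are weakly comonotonic with respect to $\bigcup_{p\in[1-\beta,1)}\mathcal P^Z_p$, i.e. (for some representatives of the a.s.-classes of $Y,Z$) $(Y(\omega)-Y(\omega'))(Z(\omega)-Z(\omega'))\ge0$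 for all $p\in[1-\beta,1)$, $\omega\in A^Z_p$, $\omega'\notin A^Z_p$. (For $\beta=0$ this is no constraint.) Random variables equal a.s. are identified; $a\wedge b=\min(a,b)$, $\bigvee$ denotes maximum, $x_+=\max(x,0)$. *)

(* Defs.v *)
From HB Require Import structures.
From mathcomp Require Import all_boot all_order all_algebra.
From mathcomp Require Import all_classical all_reals all_analysis.
Set Implicit Arguments. Unset Strict Implicit. Unset Printing Implicit Defensive.
Import Order.TTheory GRing.Theory Num.Theory.
Local Open Scope classical_set_scope.
Local Open Scope ring_scope.

Section Defs.
Context {d : measure_display} {T : measurableType d} {R : realType}.
Variable P : probability T R.

Definition atomless : Prop :=
  forall A : set T, measurable A -> lte 0%E (P A) ->
    exists B : set T, [/\ measurable B, B `<=` A, lte 0%E (P B) & lte (P B) (P A)].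

Definition continuously_distributed (X : T -> R) : Prop :=
  forall x : R, P [set w | X w = x] = 0%E.

Definition quantile (a : R) (Y : T -> R) : R :=
  inf [set x : R | lee ((1 - a)%:E) (P [set w | Y w <= x])].

Definition VaR (p : R) (Z : T -> R) : R :=
  inf [set x : R | lte (p%:E) (P [set w | Z w <= x])].

(* Y ↑_β Z : weak comonotonicity w.r.t. U_{p in [1-β,1)} P^Z_p,
   for some (measurable) representatives of the a.s.-classes of Y and Z. *)
Definition comono_beta (beta : R) (Y Z : T -> R) : Prop :=
  exists Y' Z' : T -> R,
    [/\ measurable_fun setT Y', measurable_fun setT Z',
        {ae P, forall w, Y' w = Y w}, {ae P, forall w, Z' w = Z w} &
        forall p : R, 1 - beta <= p -> p < 1 ->
          forall w w' : T, VaR p Z' < Z' w -> ~ (VaR p Z' < Z' w') ->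
            0 <= (Y' w - Y' w') * (Z' w - Z' w')].

Definition V_beta_set (n : nat) (alpha : 'I_n -> R) (beta : R) (X : T -> R)
    : set (\bar R) :=
  [set ((\sum_(i < n) quantile (alpha i) (Xs i))%:E) |
     Xs in [set Xs : 'I_n -> T -> R |
       [/\ forall i, measurable_fun setT (Xs i),
           {ae P, forall w, X w <= \sum_(i < n) Xs i w} &
           forall i, comono_beta beta (Xs i) X]]].

Definition V_beta (n : nat) (alpha : 'I_n -> R) (beta : R) (X : T -> R) : \bar R :=
  ereal_inf (V_beta_set alpha beta X).

End Defs.

(* Main.v *)
Require Import Defs.
From HB Require Import structures.
From mathcomp Require Import all_boot all_order all_algebra.
From mathcomp Require Import all_classical all_reals all_analysis.
From mathcomp Require Import ring lra.
Import Order.TTheory GRing.Theory Num.Theory.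
Local Open Scope classical_set_scope.
Local Open Scope ring_scope.
Import measurable_realfun.
Set Implicit Arguments. Unset Strict Implicit. Unset Printing Implicit Defensive.

Lemma exists_inv_lt (R : realType) (e : R) : 0 < e -> exists n : nat, n.+1%:R^-1 < e.
Proof.
move=> e0; exists (Num.truncn e^-1).
rewrite invf_plt ?posrE ?ltr0Sn //.
exact: truncnS_gt.
Qed.

Lemma mset_bool d (T : measurableType d) (b : T -> bool) :
  measurable_fun setT b -> measurable [set w | b w].
Proof.
move=> mb; have := mb measurableT [set true] I.
by rewrite setTI; congr measurable; apply/seteqP; split => w /=.
Qed.

Lemma mset_le d (T : measurableType d) (R : realType) (X : T -> R) x :
  measurable_fun setT X -> measurable [set w | (X w <= x)%R].
Proof.
move=> mX; apply: (@mset_bool _ _ (fun w => X w <= x)).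
exact: measurable_fun_ler mX (measurable_cst x).
Qed.

Lemma mset_lt d (T : measurableType d) (R : realType) (X : T -> R) x :
  measurable_fun setT X -> measurable [set w | X w < x].
Proof.
move=> mX; apply: (@mset_bool _ _ (fun w => X w < x)).
exact: measurable_fun_ltr mX (measurable_cst x).
Qed.

Lemma mset_gt d (T : measurableType d) (R : realType) (X : T -> R) x :
  measurable_fun setT X -> measurable [set w | x < X w].
Proof.
move=> mX; apply: (@mset_bool _ _ (fun w => x < X w)).
exact: measurable_fun_ltr (measurable_cst x) mX.
Qed.

Lemma cdf_mono d (T : measurableType d) (R : realType) (P : probability T R)
  (X : T -> R) x y : measurable_fun setT X -> x <= y ->
  (P [set w | (X w <= x)%R] <= P [set w | (X w <= y)%R])%E.
Proof.
move=> mX xy; rewrite le_measure ?inE //; try exact: mset_le.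
by move=> w /= h; exact: le_trans h xy.
Qed.

Lemma cdf_gt d (T : measurableType d) (R : realType) (P : probability T R)
  (X : T -> R) (p : R) : measurable_fun setT X -> p < 1 ->
  exists x, (p%:E < P [set w | (X w <= x)%R])%E.
Proof.
move=> mX p1.
pose G n := [set w | X w <= n%:R].
have mG n : measurable (G n) by exact: mset_le.
have ndG : nondecreasing_seq G.
  move=> m k mk; apply/subsetPset => w; rewrite /G/= => h.
  by apply: le_trans h _; rewrite ler_nat.
have UG : \bigcup_n G n = setT.
  apply/seteqP; split => // w _; exists (Num.truncn (X w)).+1 => //.
  by rewrite /G/= ltW// truncnS_gt.
have c1 := nondecreasing_cvg_mu (mu := P) mG (bigcup_measurable (fun k _ => mG k)) ndG.
rewrite UG in c1.
have ndPG : nondecreasing_seq (P \o G).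
  by move=> m k mk; rewrite /= le_measure ?inE//; apply/subsetPset/ndG.
have c2 := ereal_nondecreasing_cvgn ndPG.
have e : (1 = ereal_sup (range (P \o G)))%E.
  by rewrite -(probability_setT P); exact: (cvg_unique (@ereal_hausdorff R) c1 c2).
have : (p%:E < ereal_sup (range (P \o G)))%E by rewrite -e lte_fin.
by case/ereal_sup_gt => _ [k _ <-] h; exists k%:R.
Qed.

Lemma cdf_lt d (T : measurableType d) (R : realType) (P : probability T R)
  (X : T -> R) (c : R) : measurable_fun setT X -> 0 < c ->
  exists x, (P [set w | (X w <= x)%R] < c%:E)%E.
Proof.
move=> mX c0.
pose G n := [set w | X w <= - n%:R].
have mG n : measurable (G n) by exact: mset_le.
have niG : nonincreasing_seq G.
  move=> m k mk; apply/subsetPset => w; rewrite /G/= => h.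
  by apply: le_trans h _; rewrite lerN2 ler_nat.
have IG : \bigcap_n G n = set0.
  apply/seteqP; split => // w /(_ (Num.truncn (- X w)).+1 I).
  rewrite /G/= => h; have := truncnS_gt (- X w).
  by rewrite ltrNl => /(le_lt_trans h); rewrite ltxx.
have P0 : (P (G 0%N) < +oo)%E by rewrite (le_lt_trans (probability_le1 _ _)) ?ltry.
have c1 := nonincreasing_cvg_mu (mu := P) P0 mG (bigcapT_measurable mG) niG.
rewrite IG measure0 in c1.
have niPG : nonincreasing_seq (P \o G).
  by move=> m k mk; rewrite /= le_measure ?inE//; apply/subsetPset/niG.
have c2 := ereal_nonincreasing_cvgn niPG.
have e := cvg_unique (@ereal_hausdorff R) c1 c2.
have : (ereal_inf ((P \o G) @` setT) < c%:E)%E by rewrite -e lte_fin.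
by case/ereal_inf_lt => _ [k _ <-] h; exists (- k%:R).
Qed.

Lemma cdf_rc d (T : measurableType d) (R : realType) (P : probability T R)
  (X : T -> R) (q : R) (c : \bar R) : measurable_fun setT X ->
  (forall x, q < x -> (c <= P [set w | (X w <= x)%R])%E) ->
  (c <= P [set w | (X w <= q)%R])%E.
Proof.
move=> mX H.
pose G n := [set w | X w <= q + n.+1%:R^-1].
have mG n : measurable (G n) by exact: mset_le.
have niG : nonincreasing_seq G.
  move=> m k mk; apply/subsetPset => w; rewrite /G/= => h.
  apply: le_trans h _; rewrite lerD2l lef_pV2 ?posrE ?ltr0Sn// ler_nat.
  by rewrite ltnS.
have IG : \bigcap_n G n = [set w | X w <= q].
  apply/seteqP; split => w /=; last first.
    move=> h k _; rewrite /G/=; apply: le_trans h _.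
    by rewrite lerDl invr_ge0 ler0n.
  move=> h; rewrite leNgt; apply/negP => qX.
  have [k hk] : exists k : nat, k.+1%:R^-1 < X w - q by apply: exists_inv_lt; rewrite subr_gt0.
  have := h k I; rewrite /G/= -lerBlDl => /(lt_le_trans hk).
  by rewrite ltxx.
have P0 : (P (G 0%N) < +oo)%E by rewrite (le_lt_trans (probability_le1 _ _)) ?ltry.
have c1 := nonincreasing_cvg_mu (mu := P) P0 mG (bigcapT_measurable mG) niG.
rewrite IG in c1.
have niPG : nonincreasing_seq (P \o G).
  by move=> m k mk; rewrite /= le_measure ?inE//; apply/subsetPset/niG.
have c2 := ereal_nonincreasing_cvgn niPG.
rewrite (cvg_unique (@ereal_hausdorff R) c1 c2).
apply: le_ereal_inf_tmp => _ [k _ <-]; apply: H.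
by rewrite ltrDl invr_gt0 ltr0Sn.
Qed.

Lemma cdf_lc d (T : measurableType d) (R : realType) (P : probability T R)
  (X : T -> R) (q : R) (c : \bar R) : measurable_fun setT X ->
  (forall x, x < q -> (P [set w | (X w <= x)%R] <= c)%E) ->
  (P [set w | (X w < q)%R] <= c)%E.
Proof.
move=> mX H.
pose G n := [set w | X w <= q - n.+1%:R^-1].
have mG n : measurable (G n) by exact: mset_le.
have ndG : nondecreasing_seq G.
  move=> m k mk; apply/subsetPset => w; rewrite /G/= => h.
  apply: le_trans h _; rewrite lerD2l lerN2 lef_pV2 ?posrE ?ltr0Sn// ler_nat.
  by rewrite ltnS.
have UG : \bigcup_n G n = [set w | X w < q].
  apply/seteqP; split => w /=.
    case=> k _; rewrite /G/= => h; apply: le_lt_trans h _.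
    by rewrite ltrBlDr ltrDl invr_gt0 ltr0Sn.
  move=> h; have [k hk] : exists k : nat, k.+1%:R^-1 < q - X w by apply: exists_inv_lt; rewrite subr_gt0.
  by exists k => //; rewrite /G/= lerBrDl -lerBrDr ltW.
have c1 := nondecreasing_cvg_mu (mu := P) mG (bigcup_measurable (fun k _ => mG k)) ndG.
rewrite UG in c1.
have ndPG : nondecreasing_seq (P \o G).
  by move=> m k mk; rewrite /= le_measure ?inE//; apply/subsetPset/ndG.
have c2 := ereal_nondecreasing_cvgn ndPG.
rewrite (cvg_unique (@ereal_hausdorff R) c1 c2).
apply: ge_ereal_sup => _ [k _ <-]; apply: H.
by rewrite ltrBlDr ltrDl invr_gt0 ltr0Sn.
Qed.

Lemma PE d (T : measurableType d) (R : realType) (P : probability T R) (A : set T) :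
  measurable A -> P A = (fine (P A))%:E.
Proof.
move=> mA; rewrite fineK // ge0_fin_numE ?measure_ge0 //.
by rewrite (le_lt_trans (probability_le1 _ _)) ?ltry.
Qed.

Lemma P01 d (T : measurableType d) (R : realType) (P : probability T R) (A : set T) :
  measurable A -> 0 <= fine (P A) <= 1.
Proof.
move=> mA; rewrite -lee_fin -PE // measure_ge0 /= -lee_fin -PE //.
exact: probability_le1.
Qed.

Lemma inf_cdf_props d (T : measurableType d) (R : realType) (P : probability T R)
  (X : T -> R) (c : R) (E : set R) : measurable_fun setT X ->
  0 < c -> c < 1 ->
  (forall x, (c%:E < P [set w | (X w <= x)%R])%E -> E x) ->
  (forall x, E x -> (c%:E <= P [set w | (X w <= x)%R])%E) ->
  [/\ has_lbound E, E !=set0, (c%:E <= P [set w | (X w <= inf E)%R])%E &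
      forall x, x < inf E -> (P [set w | (X w <= x)%R] <= c%:E)%E].
Proof.
move=> mX c0 c1 h1 h2.
have nE : E !=set0 by have [x hx] := cdf_gt P mX c1; exists x; exact: h1.
have lE : has_lbound E.
  have [x0 hx0] := cdf_lt P mX c0; exists x0 => y Ey.
  rewrite leNgt; apply/negP => yx0.
  have := le_lt_trans (h2 _ Ey) (le_lt_trans (cdf_mono P mX (ltW yx0)) hx0).
  by rewrite ltxx.
split => //.
  apply: cdf_rc => // x /(inf_lt nE) [y Ey yx].
  exact: le_trans (h2 _ Ey) (cdf_mono P mX (ltW yx)).
move=> x xinf; rewrite leNgt; apply/negP => /h1 Ex.
by have := ge_inf lE Ex; rewrite leNgt xinf.
Qed.

Lemma cdf_cont d (T : measurableType d) (R : realType) (P : probability T R)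
  (X : T -> R) (q : R) : measurable_fun setT X -> continuously_distributed P X ->
  P [set w | X w <= q] = P [set w | X w < q].
Proof.
move=> mX cX.
rewrite (measureDI P (mset_le q mX) (mset_lt q mX)).
have -> : [set w | X w <= q] `\` [set w | X w < q] = [set w | X w = q].
  apply/seteqP; split => w /=.
    by case=> h1 /negP; rewrite -leNgt => h2; apply/le_anti/andP.
  by move=> ->; split => //; rewrite ltxx.
rewrite [X in (X + _)%E](_ : _ = 0%E) ?add0e; last exact: cX q.
congr (P _); apply/seteqP; split => w /=; first by case.
by move=> h; split => //; exact: ltW.
Qed.

Lemma inf_cdf_eq d (T : measurableType d) (R : realType) (P : probability T R)
  (X : T -> R) (c : R) (E : set R) : measurable_fun setT X ->
  continuously_distributed P X ->
  0 < c -> c < 1 ->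
  (forall x, (c%:E < P [set w | (X w <= x)%R])%E -> E x) ->
  (forall x, E x -> (c%:E <= P [set w | (X w <= x)%R])%E) ->
  P [set w | (X w <= inf E)%R] = c%:E.
Proof.
move=> mX cX c0 c1 h1 h2.
have [_ _ hge hlt] := inf_cdf_props mX c0 c1 h1 h2.
apply/le_anti/andP; split => //.
by rewrite cdf_cont //; exact: cdf_lc.
Qed.

Lemma quantile_props d (T : measurableType d) (R : realType) (P : probability T R)
  (X : T -> R) (a : R) : measurable_fun setT X -> 0 < a -> a < 1 ->
  [/\ has_lbound [set x : R | lee ((1 - a)%:E) (P [set w | X w <= x])],
     ((1 - a)%:E <= P [set w | (X w <= quantile P a X)%R])%E &
     forall x, ((1 - a)%:E <= P [set w | (X w <= x)%R])%E -> quantile P a X <= x].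
Proof.
move=> mX a0 a1.
have c0 : 0 < 1 - a by rewrite subr_gt0.
have c1 : 1 - a < 1 by rewrite ltrBlDl ltrDr.
have [lE nE hge hlt] := @inf_cdf_props _ _ _ P X (1 - a)
   [set x : R | lee ((1 - a)%:E) (P [set w | X w <= x])] mX c0 c1
   (fun x h => ltW h) (fun x h => h).
split => // x hx; exact: (ge_inf lE hx).
Qed.

Lemma quantile_eq d (T : measurableType d) (R : realType) (P : probability T R)
  (X : T -> R) (a : R) : measurable_fun setT X -> continuously_distributed P X ->
  0 < a -> a < 1 ->
  P [set w | (X w <= quantile P a X)%R] = (1 - a)%:E.
Proof.
move=> mX cX a0 a1.
have c0 : 0 < 1 - a by rewrite subr_gt0.
have c1 : 1 - a < 1 by rewrite ltrBlDl ltrDr.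
exact: (@inf_cdf_eq _ _ _ P X (1 - a) _ mX cX c0 c1 (fun x h => ltW h) (fun x h => h)).
Qed.

Lemma VaR_eq d (T : measurableType d) (R : realType) (P : probability T R)
  (X : T -> R) (p : R) : measurable_fun setT X -> continuously_distributed P X ->
  0 < p -> p < 1 ->
  P [set w | (X w <= VaR P p X)%R] = p%:E.
Proof.
move=> mX cX p0 p1.
exact: (@inf_cdf_eq _ _ _ P X p _ mX cX p0 p1 (fun x h => h) (fun x h => ltW h)).
Qed.

Lemma eq_off_null d (T : measurableType d) (R : realType) (P : probability T R)
  (A B N : set T) : measurable A -> measurable B -> measurable N -> P N = 0%E ->
  A `\` N = B `\` N -> P A = P B.
Proof.
move=> mA mB mN PN e.
have h C : measurable C -> P C = P (C `\` N).
  move=> mC; rewrite (measureDI P mC mN).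
  rewrite [X in (_ + X)%E](_ : _ = 0%E) ?adde0 //.
  have : (P (C `&` N) <= P N)%E.
    by rewrite le_measure ?inE //; try exact: measurableI; exact: subIsetr.
  rewrite PN => hh; apply/eqP; rewrite -measure_le0; exact: hh.
by rewrite (h A mA) (h B mB) e.
Qed.

Lemma ae_cdf d (T : measurableType d) (R : realType) (P : probability T R)
  (X Y : T -> R) (x : R) : measurable_fun setT X -> measurable_fun setT Y ->
  {ae P, forall w, Y w = X w} ->
  P [set w | (Y w <= x)%R] = P [set w | (X w <= x)%R].
Proof.
move=> mX mY [N [mN PN HN]].
apply: (eq_off_null (mset_le x mY) (mset_le x mX) mN PN).
apply/seteqP; split => w /= [h1 h2]; split => //;
  have eqw : Y w = X w by apply: contra_notP h2 => h; exact: HN.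
- by rewrite -eqw.
- by rewrite eqw.
Qed.

Lemma ae_quantile d (T : measurableType d) (R : realType) (P : probability T R)
  (X Y : T -> R) (a : R) : measurable_fun setT X -> measurable_fun setT Y ->
  {ae P, forall w, Y w = X w} -> quantile P a Y = quantile P a X.
Proof.
move=> mX mY h; rewrite /quantile; congr inf; apply/seteqP; split => x /=;
by rewrite (ae_cdf x mX mY h).
Qed.

Lemma ae_VaR d (T : measurableType d) (R : realType) (P : probability T R)
  (X Y : T -> R) (p : R) : measurable_fun setT X -> measurable_fun setT Y ->
  {ae P, forall w, Y w = X w} -> VaR P p Y = VaR P p X.
Proof.
move=> mX mY h; rewrite /VaR; congr inf; apply/seteqP; split => x /=;
by rewrite (ae_cdf x mX mY h).
Qed.

Lemma union_bound d (T : measurableType d) (R : realType) (P : probability T R)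
  n (D : 'I_n -> set T) (A E : set T) : measurable A -> (forall i, measurable (D i)) ->
  measurable E -> E `<=` A `|` [set w | exists i, D i w] ->
  (P E <= P A + \sum_(i < n) P (D i))%E.
Proof.
move=> mA mD mE sub.
pose Dn k := if insub k is Some i then D i else set0.
have mDn k : measurable (Dn k) by rewrite /Dn; case: insub.
pose B := \big[setU/set0]_(k < n) Dn k.
have mB : measurable B by apply: bigsetU_measurable => k _.
have EB : E `<=` A `|` B.
  move=> w /sub [h|[i hi]]; [by left|right].
  rewrite /B -bigcup_mkord; exists (val i) => //=.
  by rewrite /Dn valK.
apply: (le_trans (le_measure _ _ _ EB)); rewrite ?inE //; first exact: measurableU.
apply: (le_trans (measureU2 P mA mB)); rewrite leeD2l //.
apply: (le_trans (Boole_inequality P (fun k _ => mDn k))).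
by rewrite le_eqVlt; apply/orP; left; apply/eqP; apply: eq_bigr => i _; rewrite /Dn valK.
Qed.

Lemma crossing (U : nat -> Prop) n : U 0%N -> ~ U n ->
  exists j, (j < n)%N /\ U j /\ ~ U j.+1.
Proof.
elim: n => [h0 hn|n IH h0 hn]; first by [].
have [Un|nUn] := pselect (U n).
  by exists n; split => //; rewrite ltnSn.
have [j [jn [h1 h2]]] := IH h0 nUn; exists j; split => //.
exact: ltnW.
Qed.

Lemma quantile_le_c d (T : measurableType d) (R : realType) (P : probability T R)
  (Y : T -> R) (a c : R) : measurable_fun setT Y -> (forall w, c <= Y w) ->
  0 < a -> a < 1 -> ((1 - a)%:E <= P [set w | (Y w <= c)%R])%E ->
  quantile P a Y <= c.
Proof.
move=> mY hc a0 a1 hP.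
have lE : has_lbound [set x : R | lee ((1 - a)%:E) (P [set w | Y w <= x])].
  exists c => x /= hx; rewrite leNgt; apply/negP => xc.
  have : [set w | Y w <= x] = set0.
    apply/seteqP; split => // w /= h.
    by have := lt_le_trans (le_lt_trans h xc) (hc w); rewrite ltxx.
  move=> e; move: hx; rewrite e measure0 lee_fin => h.
  have : 0 < 1 - a by rewrite subr_gt0.
  by rewrite ltNge h.
exact: (ge_inf lE hP).
Qed.

Lemma setC_le (T : Type) (R : realType) (X : T -> R) (v : R) :
  ~` [set w | (X w <= v)%R] = [set w | v < X w].
Proof.
by apply/seteqP; split => w /=; rewrite ltNge => h; apply/negP.
Qed.

Lemma ub_generic d (T : measurableType d) (R : realType) (P : probability T R)
  (X : T -> R) n (alpha : 'I_n -> R) (beta q : R) (k : 'I_n) (s : 'I_n -> T -> bool) :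
  measurable_fun setT X ->
  (forall i, 0 < alpha i) -> (forall i, alpha i < 1) ->
  (forall i, measurable_fun setT (s i)) ->
  (forall i, (P [set w | s i w] <= (alpha i)%:E)%E) ->
  (forall w, q < X w -> exists i, s i w) ->
  (forall i p, 1 - beta <= p -> p < 1 -> forall w w', VaR P p X < X w ->
     ~ (VaR P p X < X w') -> s i w' -> q < X w' -> s i w) ->
  (V_beta P alpha beta X <= q%:E)%E.
Proof.
move=> mX a0 a1 ms hs cov com.
pose c i := if i == k then q else 0.
have sc : \sum_(i < n) c i = q.
  by rewrite (bigD1 k) //= /c eqxx big1 ?addr0 // => i /negbTE ->.
pose g i w := if s i w then Num.max (X w - q) 0 else 0.
have g0 i w : 0 <= g i w by rewrite /g; case: ifP => // _; rewrite le_max lexx orbT.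
pose Xs i w := c i + g i w.
have mg i : measurable_fun setT (g i).
  apply: (measurable_fun_ifT (ms i)); last exact: (@measurable_cst _ _ _ _ setT (0:R)).
  apply: measurable_maxr; last exact: (@measurable_cst _ _ _ _ setT (0:R)).
  by apply: measurable_funB => //; exact: measurable_cst.
have mXs i : measurable_fun setT (Xs i).
  by apply: measurable_funD => //; exact: measurable_cst.
apply: ge_ereal_inf; exists ((\sum_(i < n) quantile P (alpha i) (Xs i))%:E).
  exists Xs => //; split => //.
  - apply: aeW => w; rewrite /Xs big_split /= sc.
    have [qX|Xq] := ltP q (X w); last first.
      by apply: le_trans Xq _; rewrite lerDl sumr_ge0.
    have [i si] := cov w qX.
    apply: (le_trans (_ : X w <= q + g i w)).
      by rewrite /g si -lerBlDl le_max lexx.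
    by rewrite lerD2l (bigD1 i) //= lerDl sumr_ge0.
  - move=> i; exists (Xs i), X; split => //; try exact: aeW.
    move=> p p1 p2 w w' hw hw'.
    have Xww : X w' < X w by rewrite ltNge; apply/negP => h; apply: hw'; exact: lt_le_trans hw h.
    apply: mulr_ge0; last by rewrite subr_ge0 ltW.
    rewrite subr_ge0 /Xs lerD2l /g.
    case: ifP => sw'; last by case: ifP => // _; rewrite le_max lexx orbT.
    have [qX'|X'q] := ltP q (X w'); last first.
      rewrite (_ : Num.max (X w' - q) 0 = 0); last by apply/max_idPr; rewrite subr_le0.
      by case: ifP => // _; rewrite le_max lexx orbT.
    rewrite (com i p p1 p2 w w' hw hw' sw' qX').
    by rewrite le_max2 ?lexx // lerD2r ltW.
rewrite lee_fin -sc; apply: ler_sum => i _.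
apply: quantile_le_c => //.
- by move=> w; rewrite /Xs lerDl.
- have mS : measurable [set w | s i w] by exact: mset_bool.
  have sub : ~` [set w | s i w] `<=` [set w | Xs i w <= c i].
    by move=> w /= /negP/negbTE si; rewrite /Xs /g si addr0.
  have h1 : ((1 - alpha i)%:E <= P (~` [set w | s i w]))%E.
    by rewrite probability_setC // EFinB leeB.
  apply: (le_trans h1); rewrite le_measure ?inE //; first exact: measurableC.
  apply: (@mset_bool _ _ (fun w => Xs i w <= c i)).
  by apply: measurable_fun_ler => //; exact: measurable_cst.
Qed.

Lemma lb_main d (T : measurableType d) (R : realType) (P : probability T R)
  (X : T -> R) n (alpha : 'I_n -> R) (beta M : R) :
  measurable_fun setT X -> continuously_distributed P X ->
  0 <= beta -> beta <= 1 ->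
  (forall i, 0 < alpha i) -> (forall i, alpha i < 1) ->
  (forall i, alpha i <= M) -> 0 < M -> M < 1 ->
  0 < Num.min beta M + \sum_(i < n) Num.max (alpha i - beta) 0 ->
  Num.min beta M + \sum_(i < n) Num.max (alpha i - beta) 0 < 1 ->
  ((quantile P (Num.min beta M + \sum_(i < n) Num.max (alpha i - beta) 0) X)%:E
     <= V_beta P alpha beta X)%E.
Proof.
move=> mX cX b0 b1 a0 a1 hM M0 M1 g0 g1.
set b := Num.min beta M.
set Sp := \sum_(i < n) _.
apply: le_ereal_inf_tmp => _ [Xs [mXs hae hcom] <-].
rewrite lee_fin.
set S := \sum_(i < n) _.
have [lE _ Qlb] := quantile_props P mX g0 g1.
apply: Qlb.
have : forall i, exists YZ : (T -> R) * (T -> R),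
    [/\ measurable_fun setT YZ.1, measurable_fun setT YZ.2,
        {ae P, forall w, YZ.1 w = Xs i w}, {ae P, forall w, YZ.2 w = X w} &
        forall p : R, 1 - beta <= p -> p < 1 ->
          forall w w' : T, VaR P p YZ.2 < YZ.2 w -> ~ (VaR P p YZ.2 < YZ.2 w') ->
            0 <= (YZ.1 w - YZ.1 w') * (YZ.2 w - YZ.2 w')].
  by move=> i; have [Y' [Z' hh]] := hcom i; exists (Y', Z').
case/choice => YZ hYZ.
pose Y i := (YZ i).1; pose Z i := (YZ i).2.
have mY i : measurable_fun setT (Y i) by case: (hYZ i).
have mZ i : measurable_fun setT (Z i) by case: (hYZ i).
pose qi i := quantile P (alpha i) (Xs i).
pose B i := [set w | qi i < Y i w].
have mB i : measurable (B i) by exact: mset_gt.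
have hB i : (P (B i) <= (alpha i)%:E)%E.
  have [_ hq _] := quantile_props P (mXs i) (a0 i) (a1 i).
  have : ((1 - alpha i)%:E <= P [set w | (Y i w <= qi i)%R])%E.
    by rewrite (ae_cdf _ (mXs i) (mY i)) //; case: (hYZ i).
  have -> : [set w | (Y i w <= qi i)%R] = ~` B i.
    by apply/seteqP; split => w /=; rewrite leNgt => /negP.
  rewrite probability_setC // (PE P (mB i)) -EFinB !lee_fin; lra.
have hG : {ae P, forall w, X w <= \sum_(i < n) Xs i w /\
            forall i, Y i w = Xs i w /\ Z i w = X w}.
  have hF : {ae P, forall w, forall i, Y i w = Xs i w /\ Z i w = X w}.
    apply: filter_forall => i; case: (hYZ i) => _ _ h1 h2 _.
    by move: h1 h2; apply: filterS2 => w e1 e2; split; [exact: e1 | exact: e2].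
  by move: hae hF; apply: filterS2 => w h1 h2; split; [exact: h1 | exact: h2].
case: hG => N [mN PN HN].
have good w : ~ N w -> X w <= \sum_(i < n) Xs i w /\
            forall i, Y i w = Xs i w /\ Z i w = X w.
  by move=> nw; apply: contra_notP nw => h; exact: HN.
have keyab i : alpha i - b <= Num.max (alpha i - beta) 0.
  rewrite /b minEle; case: ifP => h; first by rewrite le_max lexx.
  by rewrite le_max subr_le0 hM orbT.
have b_ge0 : 0 <= b by rewrite /b le_min b0 ltW.
have b_le : b <= beta by rewrite /b ge_min lexx.
have [A [mA PA hD]] : exists A : set T, [/\ measurable A, (P A <= b%:E)%E &
   forall i, (P ((B i `&` ~` N) `\` A) <= (Num.max (alpha i - beta) 0)%:E)%E].
  case: (eqVneq beta 0) => [b00|bn0].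
    exists set0; split => //; first by rewrite measure0 lee_fin.
    move=> i.
    have hmax : ((alpha i)%:E <= (Num.max (alpha i - beta) 0)%:E)%E.
      by rewrite b00 subr0 lee_fin le_max lexx.
    apply: le_trans (le_trans (hB i) hmax); rewrite le_measure ?inE //.
    - by apply: measurableD => //; apply: measurableI => //; exact: measurableC.
    - by move=> w [[]].
  have bpos : 0 < b by rewrite /b lt_min M0 andbT lt0r bn0 b0.
  have blt1 : b < 1 by rewrite /b; apply: le_lt_trans M1; rewrite ge_min lexx orbT.
  pose p := 1 - b.
  have p0 : 0 < p by rewrite /p subr_gt0.
  have p1 : p < 1 by rewrite /p ltrBlDl ltrDr.
  pose v := VaR P p X.
  pose A := [set w | v < X w].
  have mA : measurable A by exact: mset_gt.
  have hPA : P A = b%:E.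
    have -> : A = ~` [set w | (X w <= v)%R] by rewrite setC_le.
    rewrite probability_setC; last exact: mset_le.
    by rewrite VaR_eq // -EFinB /p opprB addrC subrK.
  exists A; split => //; first by rewrite hPA.
  move=> i.
  have mD : measurable ((B i `&` ~` N) `\` A).
    by apply: measurableD => //; apply: measurableI => //; exact: measurableC.
  have [[w' [[Bw' nNw'] nAw']]|nex] := pselect (exists w', ((B i `&` ~` N) `\` A) w'); last first.
    have -> : (B i `&` ~` N) `\` A = set0.
      by apply/seteqP; split => // w hw; apply: nex; exists w.
    by rewrite measure0 lee_fin le_max lexx orbT.
  have sub : A `&` ~` N `<=` B i.
    move=> w [Aw nNw].
    have [_ hw] := good w nNw; have [_ hw'] := good w' nNw'.
    have [_ _ _ hZ hc] := hYZ i.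
    have hV : VaR P p (Z i) = v by exact: ae_VaR.
    have pb : 1 - beta <= p by rewrite /p lerD2l lerN2.
    have := hc p pb p1 w w'.
    rewrite -/(Z i) -/(Y i) hV (proj2 (hw i)) (proj2 (hw' i)).
    move=> /(_ Aw nAw'); rewrite pmulr_lge0 ?subr_gt0; last first.
      by rewrite ltNge; apply/negP => h; apply: nAw'; exact: lt_le_trans Aw h.
    rewrite subr_ge0 => h; rewrite /B /=; exact: lt_le_trans Bw' h.
  have hAN : P (A `&` ~` N) = P A.
    apply: (eq_off_null _ mA mN PN); first by apply: measurableI => //; exact: measurableC.
    by apply/seteqP; split => w /= [] //; case.
  have h1 : (P (A `&` ~` N) <= P (B i `&` A))%E.
    rewrite le_measure ?inE //; try solve [apply: measurableI => //; exact: measurableC | exact: measurableI].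
    by move=> w [Aw nNw]; split => //; exact: sub.
  have h2 : (P ((B i `&` ~` N) `\` A) <= P (B i `\` A))%E.
    rewrite le_measure ?inE //; try solve [exact: measurableD].
    by move=> w [[]].
  have h3 : P (B i) = (P (B i `\` A) + P (B i `&` A))%E := measureDI P (mB i) mA.
  have := hB i; rewrite h3.
  move: h1 h2; rewrite hAN hPA (PE P mD) (PE P (measurableD (mB i) mA)).
  rewrite (PE P (measurableI _ _ (mB i) mA)) -EFinD !lee_fin.
  by have := keyab i; lra.
have mE : measurable [set w | S < X w] by exact: mset_gt.
have mEN : measurable ([set w | S < X w] `&` ~` N).
  by apply: measurableI => //; exact: measurableC.
have mD i : measurable ((B i `&` ~` N) `\` A).
  by apply: measurableD => //; apply: measurableI => //; exact: measurableC.
have hE : (P [set w | (S < X w)%R] <= (b + Sp)%:E)%E.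
  rewrite (eq_off_null mE mEN mN PN); last first.
    by apply/seteqP; split => w /= [] //; case.
  apply: (le_trans (union_bound P mA mD mEN _)).
    move=> w [Sw nNw].
    have [hsum hw] := good w nNw.
    have [i hi] : exists i, qi i < Y i w.
      case: (pselect (exists i, qi i < Y i w)) => // hn; exfalso.
      have : X w <= S.
        apply: (le_trans hsum); rewrite /S; apply: ler_sum => i _.
        rewrite -(proj1 (hw i)) leNgt; apply/negP => h; apply: hn; exists i; exact: h.
      by rewrite leNgt Sw.
    have [Aw|nAw] := pselect (A w); first by left.
    by right; exists i; split => //; split.
  rewrite EFinD leeD //.
  by rewrite /Sp -sumEFin; apply: lee_sum => i _; exact: hD.
have -> : [set w | (X w <= S)%R] = ~` [set w | S < X w] by rewrite -setC_le setCK.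
rewrite probability_setC //.
move: hE; rewrite (PE P mE) -EFinB !lee_fin /b /Sp; lra.
Qed.

Lemma ub_caseA d (T : measurableType d) (R : realType) (P : probability T R)
  (X : T -> R) n (alpha : 'I_n -> R) (beta : R) (k : 'I_n) :
  measurable_fun setT X ->
  (forall i, 0 < alpha i) -> (forall i, alpha i < 1) ->
  (forall i, alpha i <= alpha k) ->
  (V_beta P alpha beta X <= (quantile P (alpha k) X)%:E)%E.
Proof.
move=> mX a0 a1 hk.
set q := quantile P (alpha k) X.
have [_ hq _] := quantile_props P mX (a0 k) (a1 k).
apply: (@ub_generic _ _ _ P X n alpha beta q k (fun i w => (i == k) && (q < X w))) => //.
- move=> i; apply: measurable_and; first exact: measurable_cst.
  exact: measurable_fun_ltr (measurable_cst _) mX.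
- move=> i /=; case: (eqVneq i k) => [->|ik].
    have -> : [set w | true && (q < X w)] = ~` [set w | (X w <= q)%R].
      by rewrite setC_le.
    rewrite probability_setC; last exact: mset_le.
    move: hq; rewrite (PE P (mset_le q mX)) -EFinB !lee_fin; lra.
  have -> : [set w | false && (q < X w)] = set0.
    by apply/seteqP; split => // w /=.
  by rewrite measure0 lee_fin ltW.
- by move=> w qw; exists k; rewrite eqxx qw.
- move=> i p _ _ w w' hw hw' /andP[ik qw'] _; rewrite ik /=.
  apply: (lt_trans qw'); rewrite ltNge; apply/negP => h; apply: hw'.
  exact: lt_le_trans hw h.
Qed.

Lemma lev_succ (R : realType) n (f : 'I_n -> R) (i : 'I_n) :
  \sum_(k < n | (k < i.+1)%N) f k = \sum_(k < n | (k < i)%N) f k + f i.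
Proof.
rewrite (bigD1 i) /=; last by rewrite ltnSn.
rewrite addrC; congr (_ + _); apply: eq_bigl => k.
by rewrite ltnS andbC ltn_neqAle.
Qed.

Lemma lev_all (R : realType) n (f : 'I_n -> R) :
  \sum_(k < n | (k < n)%N) f k = \sum_(k < n) f k.
Proof. by apply: eq_bigl => k; rewrite ltn_ord. Qed.

Lemma lev_mono (R : realType) n (f : 'I_n -> R) j j' :
  (forall k, 0 <= f k) -> (j <= j')%N ->
  \sum_(k < n | (k < j)%N) f k <= \sum_(k < n | (k < j')%N) f k.
Proof.
move=> f0 jj; rewrite [leLHS]big_mkcond [leRHS]big_mkcond /=.
apply: ler_sum => k _; case: ifP => h1; case: ifP => h2 //.
by move: h2; rewrite (leq_trans h1 jj).
Qed.

Lemma setC_bool (T : Type) (b : T -> bool) : [set w | ~~ b w] = ~` [set w | b w].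
Proof. by apply/seteqP; split => w /=; [move/negP | move/negP]. Qed.

Lemma ub_caseB d (T : measurableType d) (R : realType) (P : probability T R)
  (X : T -> R) n (alpha : 'I_n -> R) (beta : R) (k : 'I_n) :
  measurable_fun setT X -> continuously_distributed P X ->
  (forall i, 0 < alpha i) -> (forall i, alpha i < 1) ->
  (forall i, alpha i <= alpha k) -> 0 <= beta -> beta < alpha k ->
  beta + \sum_(i < n) Num.max (alpha i - beta) 0 < 1 ->
  (V_beta P alpha beta X <=
     (quantile P (beta + \sum_(i < n) Num.max (alpha i - beta) 0) X)%:E)%E.
Proof.
move=> mX cX a0 a1 hk b0 bk g1.
set f := fun i => Num.max (alpha i - beta) 0.
set Sp := \sum_(i < n) _.
have f0 i : 0 <= f i by rewrite /f le_max lexx orbT.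
have fE i : beta < alpha i -> f i = alpha i - beta.
  by move=> h; rewrite /f; apply/max_idPl; rewrite subr_ge0 ltW.
have fE0 i : alpha i <= beta -> f i = 0.
  by move=> h; rewrite /f; apply/max_idPr; rewrite subr_le0.
pose lev j := beta + \sum_(i < n | (i < j)%N) f i.
have levn : lev n = beta + Sp by rewrite /lev lev_all.
have lev0 : lev 0%N = beta by rewrite /lev big1 ?addr0 // => i; rewrite ltn0.
have levS (i : 'I_n) : lev i.+1 = lev i + f i by rewrite /lev lev_succ addrA.
have levle j : (j <= n)%N -> lev j <= beta + Sp.
  by move=> jn; rewrite -levn /lev lerD2l; exact: lev_mono.
have levge j : beta <= lev j by rewrite /lev lerDl sumr_ge0.
have n0 : (0 < n)%N by apply: leq_ltn_trans (ltn_ord k).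
pose i0 : 'I_n := Ordinal n0.
have levpos j : (0 < j)%N || (beta != 0) -> 0 < lev j.
  case/orP => h.
    apply: (lt_le_trans _ (_ : lev 1%N <= lev j)); last first.
      by rewrite /lev lerD2l; exact: lev_mono.
    have -> : lev 1%N = lev i0 + f i0 by exact: (levS i0).
    rewrite lev0; apply: (lt_le_trans (a0 i0)).
    by rewrite -lerBlDl /f le_max lexx.
  by apply: lt_le_trans (levge j); rewrite lt0r h b0.
pose bq j := quantile P (lev j) X.
have -> : beta + Sp = lev n by [].
pose U j w := ((j == 0)%N && (beta == 0)) || (X w <= bq j).
have mUf j : measurable_fun setT (U j).
  apply: measurable_or; first exact: measurable_cst.
  exact: measurable_fun_ler mX (measurable_cst _).
have mU j : measurable [set w | U j w] by exact: mset_bool.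
have PU j : (j <= n)%N -> P [set w | U j w] = (1 - lev j)%:E.
  move=> jn; case: (boolP ((j == 0)%N && (beta == 0))) => [/andP[/eqP j0 /eqP b00]|h].
    have -> : [set w | U j w] = setT by apply/seteqP; split => // w _; rewrite /U j0 b00 !eqxx.
    by rewrite probability_setT j0 lev0 b00 subr0.
  have lp : 0 < lev j.
    apply: levpos; case: (posnP j) h => [|jp] h //=.
  have l1 : lev j < 1 by apply: le_lt_trans (levle j jn) g1.
  rewrite -(quantile_eq mX cX lp l1); congr (P _).
  by apply/seteqP; split => w /=; rewrite /U (negbTE h).
have PT : (P [set w | ~~ U 0%N w] <= beta%:E)%E.
  rewrite setC_bool probability_setC // PU // lev0 -EFinB lee_fin; lra.
pose I (i : 'I_n) w := U i w && ~~ U i.+1 w.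
have mI i : measurable [set w | I i w].
  by apply: mset_bool; apply: measurable_and => //; exact: measurable_neg.
have PI i : (P [set w | I i w] <= (f i)%:E)%E.
  have nest : [set w | U i.+1 w] `<=` [set w | U i w] \/
              [set w | U i w] `<=` [set w | U i.+1 w].
    case: (boolP ((i == 0 :> nat) && (beta == 0))) => h.
      by left => w _; rewrite /= /U h.
    have [le|le] := leP (bq i.+1) (bq i); [left|right] => w /=; rewrite /U /= (negbTE h) //=.
      by move=> h'; exact: le_trans h' le.
    by move=> h'; exact: le_trans h' (ltW le).
  case: nest => sub; last first.
    have -> : [set w | I i w] = set0.
      by apply/seteqP; split => // w /= /andP[h1 /negP]; apply; exact: sub.
    by rewrite measure0 lee_fin.
  have e1 : P [set w | U i w] = (P ([set w | U i w] `\` [set w | U i.+1 w]) +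
                                 P ([set w | U i w] `&` [set w | U i.+1 w]))%E.
    exact: measureDI.
  have -> : [set w | I i w] = [set w | U i w] `\` [set w | U i.+1 w].
    by apply/seteqP; split => w /=; [move/andP=> [h1 /negP] | move=> [h1 /negP h2]; apply/andP].
  move: e1; rewrite (setIidr sub) PU; last exact: ltnW.
  rewrite PU // (PE P (measurableD (mU i) (mU i.+1))) -EFinD => -[e2].
  rewrite lee_fin; move: (levS i); lra.
pose s i w := (beta < alpha i) && (~~ U 0%N w || I i w).
apply: (@ub_generic _ _ _ P X n alpha beta (bq n) k s) => //.
- move=> i; apply: measurable_and; first exact: measurable_cst.
  apply: measurable_or; first exact: measurable_neg.
  by apply: measurable_and => //; exact: measurable_neg.
- move=> i; case: (boolP (beta < alpha i)) => h; last first.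
    have -> : [set w | s i w] = set0 by apply/seteqP; split => // w; rewrite /s (negbTE h).
    by rewrite measure0 lee_fin ltW.
  have -> : [set w | s i w] = [set w | ~~ U 0%N w] `|` [set w | I i w].
    by apply/seteqP; split => w; rewrite /s h /=; move/orP.
  apply: (le_trans (measureU2 P (mset_bool (measurable_neg (mUf 0%N))) (mI i))).
  apply: (le_trans (leeD PT (PI i))); rewrite (fE i h) -EFinD lee_fin; lra.
- move=> w qw.
  case: (boolP (U 0%N w)) => u0; last by exists k; rewrite /s bk u0.
  have nUn : ~ U n w.
    rewrite /U; have -> : (n == 0)%N = false by apply/negbTE; rewrite -lt0n.
    by rewrite /= leNgt qw.
  have [j [jn [Uj nUj]]] := @crossing (fun j => is_true (U j w)) n u0 nUn.
  pose i : 'I_n := Ordinal jn.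
  exists i; rewrite /s /I /=; apply/andP; split; last first.
    by rewrite Uj /=; apply/orP; right; apply/negP.
  case: (eqVneq beta 0) => [->|bn0]; first exact: a0.
  rewrite ltNge; apply/negP => hb; apply: nUj.
  have eb : bq j.+1 = bq j by rewrite /bq (levS i) (fE0 i hb) addr0.
  by move: Uj; rewrite /U (negbTE bn0) !andbF /= eb.
- move=> i p p1 p2 w w' hw hw' /andP[hb _] _.
  rewrite /s hb /=; apply/orP; left.
  have bpos : 0 < beta by move: p1 p2; lra.
  have b1 : beta < 1 by apply: lt_trans hb (a1 i).
  have [lE _ Qlb] := quantile_props P mX bpos b1.
  have hq : bq 0%N <= VaR P p X.
    rewrite /bq lev0; apply: lb_le_inf.
      by have [x hx] := cdf_gt P mX p2; exists x.
    move=> x /= hx; apply: Qlb; apply: le_trans (ltW hx).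
    by rewrite lee_fin; lra.
  rewrite /U /= (negbTE (lt0r_neq0 bpos)) /= -ltNge.
  exact: le_lt_trans hq hw.
Qed.

Theorem theorem6p1 (d : measure_display) (T : measurableType d) (R : realType)
  (P : probability T R) (X : T -> R) (n : nat) (alpha : 'I_n -> R) (beta : R) :
  atomless P ->
  measurable_fun setT X ->
  continuously_distributed P X ->
  (1 <= n)%N ->
  (forall i, 0 < alpha i) ->
  \sum_(i < n) alpha i < 1 ->
  0 <= beta <= 1 ->
  V_beta P alpha beta X =
    (quantile P
       (Num.min beta (\big[Num.max/0]_(i < n) alpha i)
        + \sum_(i < n) Num.max (alpha i - beta) 0) X)%:E.
Proof.
move=> _ mX cX n1 a0 asum /andP[b0 b1].
have a1 i : alpha i < 1.
  apply: le_lt_trans asum; rewrite (bigD1 i) //= lerDl sumr_ge0 // => j _.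
  exact: ltW.
set M := \big[Num.max/0]_(i < n) alpha i.
have hM i : alpha i <= M by exact: le_bigmax.
have [k _ Mk] : {k : 'I_n | k \in predT & M = alpha k}.
  by apply: (Order.TotalTheory.eq_bigmax (Ordinal n1)) => // i _; exact: ltW.
set Sp := \sum_(i < n) _.
have f_le i : Num.max (alpha i - beta) 0 <= alpha i.
  by rewrite ge_max (ltW (a0 i)) andbT lerBlDr lerDl.
have mm : Num.min beta (alpha k) + Num.max (alpha k - beta) 0 = alpha k.
  by rewrite minEle maxEle; case: leP => h; case: leP => h'; lra.
have gE : Num.min beta M + Sp =
    alpha k + \sum_(i < n | i != k) Num.max (alpha i - beta) 0.
  by rewrite /Sp (bigD1 k) //= addrA Mk mm.
have g0 : 0 < Num.min beta M + Sp.
  by rewrite gE; apply: lt_le_trans (a0 k) _; rewrite lerDl sumr_ge0 // => i _;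
     rewrite le_max lexx orbT.
have g1 : Num.min beta M + Sp < 1.
  rewrite gE; apply: le_lt_trans asum; rewrite [leRHS](bigD1 k) //= lerD2l.
  by apply: ler_sum => i _.
apply/le_anti/andP; split; last first.
  apply: lb_main => //; rewrite -?Mk //.
  by rewrite Mk.
  by rewrite Mk.
case: (boolP (M <= beta)) => hMb; last rewrite -ltNge in hMb.
  have -> : Num.min beta M + Sp = alpha k.
    rewrite gE big1 ?addr0 // => i _; apply/max_idPr.
    by rewrite subr_le0; apply: le_trans (hM i) hMb.
  apply: ub_caseA => // i; rewrite -Mk; exact: hM.
have -> : Num.min beta M = beta by apply/min_idPl; exact: ltW.
apply: (@ub_caseB _ _ _ P X n alpha beta k) => //; first by move=> i; move: (hM i); rewrite Mk.
- by move: hMb; rewrite Mk.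
- by move: g1; rewrite (_ : Num.min beta M = beta) //; apply/min_idPl; exact: ltW.
Qed.
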